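(* Let $d$ be a differential on a graded complex vector space. Consider only homotopies $h$ (degree $-1$, $h^2=0$, $hdh=h$) that satisfy $dhd=d$, and write $\pi=1-dh-hd$. If $h$ is such a homotopy, then each of the following $h'$ is such a homotopy, with $\pi'=1-dh'-h'd$ as indicated: (A) $h'=h(1-a\pi)$, $\pi'=(1+dha)\pi$, for any $a\in\operatorname{End}^0$ with $da=\pi a=ad=ah=0$; (B) $h'=(1+dbd)h(1-dbd)$, $\pi'=\pi$, for any $b\in\operatorname{End}^{-2}$ with $\pi b=hb=bh=b\pi=0$; (C) $h'=(1-\pi c)h$, $\pi'=\pi(1+chd)$, for any $c\in\operatorname{End}^0$ with $hc=dc=c\pi=cd=0$. Moreover any two such homotopies $h,h'$ are related by a composition of transformations of types A, B, C: if $h_A$ is obtained from $h$ by (A) with $a=-dh'\pi$, $h_B$ from $h_A$ by (B) with $b=-h_Adh'h_A$, and $h_C$ from $h_B$ by (C) with $c=-\pi_Bh'd$ (where $\pi_B=1-dh_B-h_Bd$), then $h_C=h'$. *)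

(* Defs.v *)
(* Graded complex vector spaces are modelled internally:
   a module W over the complex numbers R[i] (R : realType, i.e. the reals)
   together with a family of homogeneous subspaces Wn n (n : int) of which
   W is the (internal) direct sum. *)
From HB Require Import structures.
From mathcomp Require Import all_boot all_order all_algebra.
From mathcomp Require Import reals.
From mathcomp Require Import complex.
Set Implicit Arguments. Unset Strict Implicit. Unset Printing Implicit Defensive.
Import Order.TTheory GRing.Theory Num.Theory.
Local Open Scope ring_scope.

Section Graded.
Variables (R : realType) (W : lmodType R[i]) (Wn : int -> {pred W}).

Definition is_grading : Prop :=
  [/\ forall n, (0 : W) \in Wn n,
      forall n (a : R[i]) (x y : W), x \in Wn n -> y \in Wn n -> a *: x + y \in Wn n,
      forall w : W, exists (s : seq int) (f : int -> W),
          [/\ uniq s, forall n, f n \in Wn n & w = \sum_(n <- s) f n]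
    & forall (s : seq int) (f : int -> W), uniq s -> (forall n, f n \in Wn n) ->
          \sum_(n <- s) f n = 0 -> forall n, n \in s -> f n = 0].

Definition lin (f : W -> W) : Prop :=
  forall (a : R[i]) (u v : W), f (a *: u + v) = a *: f u + f v.

Definition End_deg (k : int) (f : W -> W) : Prop :=
  lin f /\ forall n x, x \in Wn n -> f x \in Wn (n + k).

Definition differential (d : W -> W) : Prop :=
  End_deg 1 d /\ d \o d = (fun=> 0).

Definition piH (d h : W -> W) : W -> W := fun x => x - d (h x) - h (d x).

Definition good_homotopy (d h : W -> W) : Prop :=
  [/\ End_deg (-1) h, h \o h = (fun=> 0), h \o d \o h = h & d \o h \o d = d].

End Graded.

(* Main.v *)
Require Import Defs.
From HB Require Import structures.
From mathcomp Require Import all_boot all_order all_algebra.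
From mathcomp Require Import reals.
From mathcomp Require Import complex.
From mathcomp Require Import ring.
From Stdlib Require Import FunctionalExtensionality.
Import Order.TTheory GRing.Theory Num.Theory.
Set Implicit Arguments. Unset Strict Implicit.
Local Open Scope ring_scope.

Section SZ.
Variable V : zmodType.
Definition SZ := (int * V)%type.
HB.instance Definition _ := GRing.Zmodule.on SZ.
Definition szmul (x y : SZ) : SZ := (x.1 * y.1, x.2 *~ y.1 + y.2 *~ x.1).
Definition szone : SZ := (1, 0).
Lemma szmulA : associative szmul.
Proof. move=> [a u] [b v] [c w]; rewrite /szmul /=. congr (_, _); first by rewrite mulrA.
by rewrite !mulrzDl -!mulrzA addrA (mulrC c a) (mulrC b a).
Qed.
Lemma szmulC : commutative szmul.
Proof. by move=> [a u] [b v]; rewrite /szmul /= mulrC addrC. Qed.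
Lemma szmul1 : left_id szone szmul.
Proof. by move=> [a u]; rewrite /szmul /= mul1r mul0rz add0r mulr1z. Qed.
Lemma szmulD : left_distributive szmul +%R.
Proof. move=> [a u] [b v] [c w]; rewrite /szmul /=; congr (_, _); first by rewrite mulrDl.
by rewrite mulrzDl mulrzDr addrACA. Qed.
Lemma szone0 : szone != 0.
Proof. by []. Qed.
HB.instance Definition _ := GRing.Zmodule_isComNzRing.Build SZ szmulA szmulC szmul1 szmulD szone0.
Definition iota (v : V) : SZ := (0, v).
Lemma iota_is_zmod : zmod_morphism iota.
Proof. by move=> u v. Qed.
HB.instance Definition _ := GRing.isZmodMorphism.Build V SZ iota iota_is_zmod.
Lemma iota_inj : injective iota. Proof. by move=> u v []. Qed.
End SZ.

Ltac zsolve := apply: iota_inj; ring.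

Section Gen.
Variables (R : realType) (W : lmodType R[i]) (Wn : int -> {pred W}).
Implicit Types (f g : W -> W).

Lemma lin0 {f} : lin f -> f 0 = 0.
Proof. move=> L; have := L 1 0 0; rewrite !scale1r addr0 => H.
by apply: (@addrI _ (f 0)); rewrite addr0 -H. Qed.
Lemma linD {f} : lin f -> forall u v, f (u + v) = f u + f v.
Proof. by move=> L u v; have := L 1 u v; rewrite !scale1r. Qed.
Lemma linN {f} : lin f -> forall u, f (- u) = - f u.
Proof. by move=> L u; rewrite -[- u]addr0 -scaleN1r L (lin0 L) addr0 scaleN1r. Qed.

Lemma lin_comp f g : lin f -> lin g -> lin (g \o f).
Proof. by move=> Lf Lg a u v /=; rewrite Lf Lg. Qed.
Lemma lin_add f g : lin f -> lin g -> lin (f \+ g).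
Proof. by move=> Lf Lg a u v /=; rewrite Lf Lg scalerDr addrACA. Qed.
Lemma lin_opp f : lin f -> lin (\- f).
Proof. by move=> Lf a u v /=; rewrite Lf opprD scalerN. Qed.
Lemma lin_sub f g : lin f -> lin g -> lin (f \- g).
Proof. by move=> Lf Lg a u v /=; rewrite Lf Lg scalerBr opprD addrACA. Qed.
Lemma lin_id : lin (@id W).
Proof. by []. Qed.

Hypothesis G : is_grading Wn.
Lemma Wn0 n : (0 : W) \in Wn n. Proof. by case: G. Qed.
Lemma WnD n x y : x \in Wn n -> y \in Wn n -> x + y \in Wn n.
Proof. by case: G => _ H _ _ Hx Hy; have := H n 1 x y Hx Hy; rewrite scale1r. Qed.
Lemma WnN n x : x \in Wn n -> - x \in Wn n.
Proof. by case: G => _ H _ _ Hx; have := H n (-1) x 0 Hx (Wn0 n); rewrite scaleN1r addr0. Qed.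

Lemma End_comp k1 k2 k f g : k = k1 + k2 -> End_deg Wn k1 f -> End_deg Wn k2 g ->
  End_deg Wn k (g \o f).
Proof. move=> -> [Lf Df] [Lg Dg]; split; first exact: lin_comp.
by move=> n x Hx /=; rewrite addrA; apply: Dg; apply: Df. Qed.
Lemma End_add k f g : End_deg Wn k f -> End_deg Wn k g -> End_deg Wn k (f \+ g).
Proof. move=> [Lf Df] [Lg Dg]; split; first exact: lin_add.
by move=> n x Hx /=; apply: WnD; [apply: Df | apply: Dg]. Qed.
Lemma End_opp k f : End_deg Wn k f -> End_deg Wn k (\- f).
Proof. move=> [Lf Df]; split; first exact: lin_opp.
by move=> n x Hx /=; apply: WnN; apply: Df. Qed.
Lemma End_sub k f g : End_deg Wn k f -> End_deg Wn k g -> End_deg Wn k (f \- g).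
Proof. move=> [Lf Df] [Lg Dg]; split; first exact: lin_sub.
by move=> n x Hx /=; apply: WnD; [apply: Df | apply: WnN; apply: Dg]. Qed.
Lemma End_id : End_deg Wn 0 id.
Proof. by split => // n x; rewrite addr0. Qed.
End Gen.

Lemma fapp {T U : Type} {f g : T -> U} : f = g -> forall x, f x = g x.
Proof. by move=> ->. Qed.

Ltac simp r := repeat progress rewrite ?r.

Section Good.
Variables (R : realType) (W : lmodType R[i]) (Wn : int -> {pred W}) (d h : W -> W).
Hypotheses (Dd : differential Wn d) (Hh : good_homotopy Wn d h).

Lemma Ld : lin d. Proof. by case: Dd => [[]]. Qed.
Lemma dd x : d (d x) = 0. Proof. by case: Dd => _ E; exact: (fapp E x). Qed.
Lemma Edh : End_deg Wn (-1) h. Proof. by case: Hh. Qed.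
Lemma Lh : lin h. Proof. by case: Hh => [[]]. Qed.
Lemma hh x : h (h x) = 0. Proof. by case: Hh => _ E _ _; exact: (fapp E x). Qed.
Lemma hdh x : h (d (h x)) = h x. Proof. by case: Hh => _ _ E _; exact: (fapp E x). Qed.
Lemma dhd x : d (h (d x)) = d x. Proof. by case: Hh => _ _ _ E; exact: (fapp E x). Qed.

Lemma LP : lin (piH d h).
Proof. exact (lin_sub (lin_sub (@lin_id R W) (lin_comp Lh Ld)) (lin_comp Ld Lh)). Qed.
Lemma EdP : is_grading Wn -> End_deg Wn 0 (piH d h).
Proof. move=> G.
have Ed : End_deg Wn 1 d by case: Dd.
exact (End_sub G (End_sub G (End_id Wn) (End_comp (k1 := -1) (k2 := 1) (esym (addNr 1)) Edh Ed))
   (End_comp (k1 := 1) (k2 := -1) (esym (subrr 1)) Ed Edh)). Qed.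

Definition rulesG := (linD Ld, linN Ld, lin0 Ld, linD Lh, linN Lh, lin0 Lh, dd, hh, hdh, dhd,
   @opprK W, @oppr0 W, @addr0 W, @add0r W).

Lemma P_d x : piH d h (d x) = 0.
Proof. rewrite /piH; simp rulesG; zsolve. Qed.
Lemma d_P x : d (piH d h x) = 0.
Proof. rewrite /piH; simp rulesG; zsolve. Qed.
Lemma P_h x : piH d h (h x) = 0.
Proof. rewrite /piH; simp rulesG; zsolve. Qed.
Lemma h_P x : h (piH d h x) = 0.
Proof. rewrite /piH; simp rulesG; zsolve. Qed.
Lemma P_P x : piH d h (piH d h x) = piH d h x.
Proof. by rewrite {1}/piH d_P h_P (lin0 Ld) (lin0 Lh) !subr0. Qed.
End Good.

Section Parts.
Variables (R : realType) (W : lmodType R[i]) (Wn : int -> {pred W}) (d : W -> W).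
Hypotheses (G : is_grading Wn) (Dd : differential Wn d).

Lemma partA h a : good_homotopy Wn d h ->
     End_deg Wn 0 a -> d \o a = (fun=> 0) -> piH d h \o a = (fun=> 0) ->
     a \o d = (fun=> 0) -> a \o h = (fun=> 0) ->
     let h' := h \o (id \- (a \o piH d h)) in
     good_homotopy Wn d h' /\
     piH d h' = (id \+ (d \o h \o a)) \o piH d h.
Proof.
move=> Hh Ea /fapp da /fapp Pa /fapp ad /fapp ah h'.
have La : lin a by case: Ea.
have Ld := Ld Dd; have Lh := Lh Hh; have LP := LP Dd Hh.
pose rules := (linD Ld, linN Ld, lin0 Ld, linD Lh, linN Lh, lin0 Lh,
   linD La, linN La, lin0 La, linD LP, linN LP, lin0 LP,
   dd Dd, hh Hh, hdh Hh, dhd Hh, P_d Dd Hh, d_P Dd Hh, P_h Dd Hh, h_P Hh, P_P Dd Hh,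
   da, Pa, ad, ah,
   @opprK W, @oppr0 W, @addr0 W, @add0r W).
split; first split.
- exact: (End_comp (k1 := 0) (k2 := -1) (esym (add0r _))
    (End_sub G (End_id Wn) (End_comp (k1 := 0) (k2 := 0) (esym (addr0 0)) (EdP Dd Hh G) Ea))
    (Edh Hh)).
- apply: functional_extensionality => x; rewrite /h' /=; simp rules; zsolve.
- apply: functional_extensionality => x; rewrite /h' /=; simp rules; zsolve.
- apply: functional_extensionality => x; rewrite /h' /=; simp rules; zsolve.
apply: functional_extensionality => x; rewrite /h' {1}/piH /=; simp rules.
set y := a (piH d h x); rewrite /piH; zsolve.
Qed.

Lemma partB h b : good_homotopy Wn d h ->
     End_deg Wn (-2) b ->
     let h' := (id \+ (d \o b \o d)) \o h \o (id \- (d \o b \o d)) in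
     good_homotopy Wn d h' /\ piH d h' = piH d h.
Proof.
move=> Hh Eb h'.
have Lb : lin b by case: Eb.
have Ed : End_deg Wn 1 d by case: Dd.
have Ld := Ld Dd; have Lh := Lh Hh.
pose rules := (linD Ld, linN Ld, lin0 Ld, linD Lh, linN Lh, lin0 Lh,
   linD Lb, linN Lb, lin0 Lb, 
   dd Dd, hh Hh, hdh Hh, dhd Hh,
   @opprK W, @oppr0 W, @addr0 W, @add0r W).
have Ee : End_deg Wn 0 (d \o b \o d).
  apply: ((End_comp (k1 := -1) (k2 := 1) (esym (addNr 1)))^~ Ed).
  exact: (End_comp (k1 := 1) (k2 := -2) (erefl _) Ed Eb).
split; first split.
- apply: ((End_comp (k1 := -1) (k2 := 0) (esym (addr0 _)))^~ (End_add G (End_id Wn) Ee)).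
  exact: (End_comp (k1 := 0) (k2 := -1) (esym (add0r _)) (End_sub G (End_id Wn) Ee) (Edh Hh)).
- apply: functional_extensionality => x; rewrite /h' /=; simp rules; zsolve.
- apply: functional_extensionality => x; rewrite /h' /=; simp rules; zsolve.
- apply: functional_extensionality => x; rewrite /h' /=; simp rules; zsolve.
apply: functional_extensionality => x; rewrite /h' /piH /=; simp rules; zsolve.
Qed.

Lemma partC h c : good_homotopy Wn d h ->
     End_deg Wn 0 c -> h \o c = (fun=> 0) -> d \o c = (fun=> 0) ->
     c \o piH d h = (fun=> 0) -> c \o d = (fun=> 0) ->
     let h' := (id \- (piH d h \o c)) \o h in
     good_homotopy Wn d h' /\
     piH d h' = piH d h \o (id \+ (c \o h \o d)).
Proof.
move=> Hh Ec /fapp hc /fapp dc /fapp cP /fapp cd h'.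
have Lc : lin c by case: Ec.
have Ld := Ld Dd; have Lh := Lh Hh; have LP := LP Dd Hh.
pose rules := (linD Ld, linN Ld, lin0 Ld, linD Lh, linN Lh, lin0 Lh,
   linD Lc, linN Lc, lin0 Lc, linD LP, linN LP, lin0 LP,
   dd Dd, hh Hh, hdh Hh, dhd Hh, P_d Dd Hh, d_P Dd Hh, P_h Dd Hh, h_P Hh, P_P Dd Hh,
   hc, dc, cP, cd,
   @opprK W, @oppr0 W, @addr0 W, @add0r W).
split; first split.
- exact: (End_comp (k1 := -1) (k2 := 0) (esym (addr0 _)) (Edh Hh)
    (End_sub G (End_id Wn) (End_comp (k1 := 0) (k2 := 0) (esym (addr0 0)) Ec (EdP Dd Hh G)))).
- apply: functional_extensionality => x; rewrite /h' /=; simp rules; zsolve.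
- apply: functional_extensionality => x; rewrite /h' /=; simp rules; zsolve.
- apply: functional_extensionality => x; rewrite /h' /=; simp rules; zsolve.
apply: functional_extensionality => x; rewrite /h' {1}/piH /=; simp rules.
set y := piH d h (c (h (d x))); rewrite /piH; zsolve.
Qed.
End Parts.

Section Final.
Variables (R : realType) (W : lmodType R[i]) (Wn : int -> {pred W}) (d : W -> W).
Hypotheses (G : is_grading Wn) (Dd : differential Wn d).

Lemma final_part (h k : W -> W) : good_homotopy Wn d h -> good_homotopy Wn d k ->
     let a := \- (d \o k \o piH d h) in
     let hA := h \o (id \- (a \o piH d h)) in
     let b := \- (hA \o d \o k \o hA) in
     let hB := (id \+ (d \o b \o d)) \o hA \o (id \- (d \o b \o d)) in
     let c := \- (piH d hB \o k \o d) in
     let hC := (id \- (piH d hB \o c)) \o hB in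
     [/\ End_deg Wn 0 a /\ [/\ d \o a = (fun=> 0), piH d h \o a = (fun=> 0),
                               a \o d = (fun=> 0) & a \o h = (fun=> 0)],
         End_deg Wn (-2) b /\ [/\ piH d hA \o b = (fun=> 0), hA \o b = (fun=> 0),
                               b \o hA = (fun=> 0) & b \o piH d hA = (fun=> 0)],
         End_deg Wn 0 c /\ [/\ hB \o c = (fun=> 0), d \o c = (fun=> 0),
                               c \o piH d hB = (fun=> 0) & c \o d = (fun=> 0)]
       & hC = k].
Proof.
move=> Hh Hk a hA b hB c hC.
have Ed : End_deg Wn 1 d by case: Dd.
have Ld := Ld Dd; have LH := Lh Hh; have LK := Lh Hk; have LPh := LP Dd Hh.
pose rules := (linD Ld, linN Ld, lin0 Ld, linD LH, linN LH, lin0 LH,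
   linD LK, linN LK, lin0 LK, linD LPh, linN LPh, lin0 LPh,
   dd Dd, hh Hh, hdh Hh, dhd Hh, hh Hk, hdh Hk, dhd Hk,
   P_d Dd Hh, d_P Dd Hh, P_h Dd Hh, h_P Hh, P_P Dd Hh,
   @opprK W, @oppr0 W, @addr0 W, @add0r W).
have Ea : End_deg Wn 0 a.
  rewrite /a; apply: (End_opp G);  apply: (End_comp (k1 := 0) (k2 := 0) (esym (addr0 0)) (EdP Dd Hh G)).
  exact: (End_comp (k1 := -1) (k2 := 1) (esym (addNr 1)) (Edh Hk) Ed).
have da : d \o a = (fun=> 0).
  by apply: functional_extensionality => x; rewrite /a /=; simp rules.
have Pa : piH d h \o a = (fun=> 0).
  by apply: functional_extensionality => x; rewrite /a /=; simp rules.
have ad : a \o d = (fun=> 0).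
  by apply: functional_extensionality => x; rewrite /a /=; simp rules.
have ah : a \o h = (fun=> 0).
  by apply: functional_extensionality => x; rewrite /a /=; simp rules.
have HA : good_homotopy Wn d hA := (partA G Dd Hh Ea da Pa ad ah).1.
have LA := Lh HA; have LPA := LP Dd HA.
pose rulesA := (linD LA, linN LA, lin0 LA, linD LPA, linN LPA, lin0 LPA,
   hh HA, P_h Dd HA, h_P HA).
have Eb : End_deg Wn (-2) b.
  rewrite /b; apply: (End_opp G).
  apply: (End_comp (k1 := -1) (k2 := -1) (erefl _) (Edh HA)).
  apply: (End_comp (k1 := -1) (k2 := 0) (esym (addr0 _)) (Edh Hk)).
  exact: (End_comp (k1 := 1) (k2 := -1) (esym (subrr 1)) Ed (Edh HA)).
have HB : good_homotopy Wn d hB := (partB G Dd HA Eb).1.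
have LB := Lh HB; have LPB := LP Dd HB.
have Ec : End_deg Wn 0 c.
  rewrite /c; apply: (End_opp G).
  apply: (End_comp (k1 := 1) (k2 := -1) (esym (subrr 1)) Ed).
  exact: (End_comp (k1 := -1) (k2 := 0) (esym (addr0 _)) (Edh Hk) (EdP Dd HB G)).
pose rulesB := (linD LB, linN LB, lin0 LB, linD LPB, linN LPB, lin0 LPB,
   hh HB, P_h Dd HB, h_P HB, d_P Dd HB, P_d Dd HB).
split.
{ by split => //; split. }
{ split => //; split; apply: functional_extensionality => x; rewrite /b /=;
    by simp (rules, rulesA). }
{ split => //; split; apply: functional_extensionality => x; rewrite /c /=;
    by simp (rules, rulesB). }
have F1 : forall x, hA x = h (d (k x)) - h (d (k (h (d x)))).
  move=> x; rewrite /hA /a /= (P_P Dd Hh) /piH; simp rules; zsolve.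
have F2 : forall x, b x = - h (d (k (h (d (k x))))) + h (d (k (h (d (k (h (d x))))))).
  move=> x; rewrite /b /= !F1; simp rules; zsolve.
have F3 : forall x, d (b (d x)) = - d (k (h (d x))).
  move=> x; rewrite F2; simp rules; zsolve.
have F4 : forall x, hB x = h (d (k x)) - d (k (h (d (k x)))).
  move=> x; rewrite /hB /= !F3 !F1; simp rules; zsolve.
have F5 : forall x, piH d hB x = x - d (k x) - h (d x) + d (k (h (d x))).
  move=> x; rewrite /piH !F4; simp rules; zsolve.
apply: functional_extensionality => x; rewrite /hC /c /= !F5 !F4; simp rules; zsolve.
Qed.
End Final.

Unset Implicit Arguments.

Theorem mainTheorem3 (R : realType) (W : lmodType R[i]) (Wn : int -> {pred W})
  (d : W -> W) :
  is_grading Wn -> differential Wn d ->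
  (* (A) *)
  (forall h a : W -> W, good_homotopy Wn d h ->
     End_deg Wn 0 a -> d \o a = (fun=> 0) -> piH d h \o a = (fun=> 0) ->
     a \o d = (fun=> 0) -> a \o h = (fun=> 0) ->
     let h' := h \o (id \- (a \o piH d h)) in
     good_homotopy Wn d h' /\
     piH d h' = (id \+ (d \o h \o a)) \o piH d h) /\
  (* (B) *)
  (forall h b : W -> W, good_homotopy Wn d h ->
     End_deg Wn (-2) b -> piH d h \o b = (fun=> 0) -> h \o b = (fun=> 0) ->
     b \o h = (fun=> 0) -> b \o piH d h = (fun=> 0) ->
     let h' := (id \+ (d \o b \o d)) \o h \o (id \- (d \o b \o d)) in
     good_homotopy Wn d h' /\ piH d h' = piH d h) /\
  (* (C) *)
  (forall h c : W -> W, good_homotopy Wn d h ->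
     End_deg Wn 0 c -> h \o c = (fun=> 0) -> d \o c = (fun=> 0) ->
     c \o piH d h = (fun=> 0) -> c \o d = (fun=> 0) ->
     let h' := (id \- (piH d h \o c)) \o h in
     good_homotopy Wn d h' /\
     piH d h' = piH d h \o (id \+ (c \o h \o d))) /\
  (* any two such homotopies are related by A, then B, then C *)
  (forall h h' : W -> W, good_homotopy Wn d h -> good_homotopy Wn d h' ->
     let a := \- (d \o h' \o piH d h) in
     let hA := h \o (id \- (a \o piH d h)) in
     let b := \- (hA \o d \o h' \o hA) in
     let hB := (id \+ (d \o b \o d)) \o hA \o (id \- (d \o b \o d)) in
     let c := \- (piH d hB \o h' \o d) in
     let hC := (id \- (piH d hB \o c)) \o hB in
     [/\ End_deg Wn 0 a /\ [/\ d \o a = (fun=> 0), piH d h \o a = (fun=> 0),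
                               a \o d = (fun=> 0) & a \o h = (fun=> 0)],
         End_deg Wn (-2) b /\ [/\ piH d hA \o b = (fun=> 0), hA \o b = (fun=> 0),
                               b \o hA = (fun=> 0) & b \o piH d hA = (fun=> 0)],
         End_deg Wn 0 c /\ [/\ hB \o c = (fun=> 0), d \o c = (fun=> 0),
                               c \o piH d hB = (fun=> 0) & c \o d = (fun=> 0)]
       & hC = h']).
Proof.
move=> G Dd; split; first exact: (partA G Dd).
split; first by move=> h b Hh Eb _ _ _ _; exact: (partB G Dd Hh Eb).
split; first exact: (partC G Dd).
exact: (final_part G Dd).
Qed.
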